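(* Let $\{G^i\}_{i\in I}$, $G^i=(V,\{S^i_v\}_{v\in V},\{u^i_v\}_{v\in V})$, be a finite family of games over the same graph $\Gamma=(V,E)$. If $\langle\langle s^i_v\rangle_{i\in I}\rangle_{v\in V}\in NE(\prod_{i\in I}G^i)$, then $\langle s^{i_0}_v\rangle_{v\in V}\in NE(G^{i_0})$ for each $i_0\in I$.
   Context: A game over a finite simple undirected graph $\Gamma=(V,E)$ is a strategic game with player set $V$, finite strategy sets, and real pay-off functions $u_v$ depending only on the strategies of $v$ and its neighbours. $NE(G)$ is the set of pure Nash equilibria. The product $\prod_{i\in I}G^i$ is the game with player set $V$, strategy sets $S_v=\prod_{i\in I}S^i_v$, and pay-offs $u_v=\sum_{i\in I}u^i_v$ (where $u^i_v$ is evaluated at the $i$-th components of the profile); a profile of the product is written $\langle\langle s^i_v\rangle_{i\in I}\rangle_{v\in V}$. *)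

(* Defs.v *)
From mathcomp Require Import all_boot all_order all_algebra.
Set Implicit Arguments. Unset Strict Implicit. Unset Printing Implicit Defensive.
Import Order.TTheory GRing.Theory Num.Theory.
Local Open Scope ring_scope.

Definition simple_graph (V : finType) (adj : rel V) : Prop :=
  symmetric adj /\ irreflexive adj.

Definition local_payoffs (R : realFieldType) (V : finType) (adj : rel V)
    (S : V -> finType) (u : forall v : V, (forall w : V, S w) -> R) : Prop :=
  forall (v : V) (s t : forall w : V, S w),
    (forall w : V, (w == v) || adj v w -> s w = t w) -> u v s = u v t.

Definition is_NE (R : realFieldType) (V : finType) (S : V -> Type)
    (u : forall v : V, (forall w : V, S w) -> R) (s : forall w : V, S w) : Prop :=
  forall (v : V) (t : forall w : V, S w),
    (forall w : V, w != v -> t w = s w) -> u v t <= u v s.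

Definition prod_strat (I V : finType) (S : I -> V -> finType) (v : V) : finType :=
  {dffun forall i : I, S i v}.

Definition prod_payoff (R : realFieldType) (I V : finType) (S : I -> V -> finType)
    (u : forall (i : I) (v : V), (forall w : V, S i w) -> R)
    (v : V) (s : forall w : V, prod_strat S w) : R :=
  \sum_(i : I) u i v (fun w => s w i).

(* Main.v *)
Require Import Defs.
From mathcomp Require Import all_boot all_order all_algebra.
From Stdlib Require Import FunctionalExtensionality.
Import Order.TTheory GRing.Theory Num.Theory.
Local Open Scope ring_scope.

Definition upd (I : eqType) (T : I -> Type) (f : forall i, T i) (i0 : I) (x : T i0) :
  forall i, T i :=
  fun i => match i0 =P i with ReflectT e => ecast j (T j) e x | ReflectF _ => f i end.

Lemma upd_same (I : eqType) (T : I -> Type) (f : forall i, T i) (i0 : I) (x : T i0) : @upd I T f i0 x i0 = x.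
Proof.
rewrite /upd; case: eqP => // e.
by rewrite (eq_irrelevance e erefl).
Qed.

Lemma upd_other (I : eqType) (T : I -> Type) (f : forall i, T i) (i0 : I) (x : T i0) (i : I) : i0 != i -> @upd I T f i0 x i = f i.
Proof. by rewrite /upd; case: eqP. Qed.

Theorem lemma17 (R : realFieldType) (V : finType) (adj : rel V)
    (I : finType) (S : I -> V -> finType)
    (u : forall (i : I) (v : V), (forall w : V, S i w) -> R) :
  simple_graph adj ->
  (forall i : I, local_payoffs adj (u i)) ->
  forall s : forall v : V, prod_strat S v,
    is_NE (prod_payoff u) s ->
    forall i0 : I, is_NE (u i0) (fun v => s v i0).
Proof.
move=> _ _ s NE i0 v t Ht.
pose t' : forall w, prod_strat S w :=
  fun w => [ffun i => @upd I (fun j => S j w) (fun j => s w j) i0 (t w) i].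
have H := NE v t'.
have Hw : forall w, w != v -> t' w = s w.
  move=> w wv; apply/ffunP => i; rewrite ffunE.
  case: (eqVneq i0 i) => [<-|ne]; last by rewrite upd_other.
  by rewrite upd_same Ht.
have {H} := H Hw.
rewrite /prod_payoff (bigD1 i0) //= [X in _ <= X](bigD1 i0) //=.
have -> : (fun w => t' w i0) = t.
  by apply: functional_extensionality_dep => w; rewrite ffunE upd_same.
rewrite (eq_bigr (fun i => u i v (fun w => s w i))) ?lerD2r //.
move=> i ne; congr (u i v _).
apply: functional_extensionality_dep => w; rewrite ffunE upd_other //.
by rewrite eq_sym.
Qed.
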